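(* Let $\mathcal{T}=\{0,1\}$, let $P\in\Delta_{\mathcal{T},\mathcal{X},\mathcal{Y}}$ with $P(T=0)>0$, $P(T=1)>0$, and suppose $Q^*\in\arg\max_{Q\in\Delta_P}H_Q(T\mid X,Y)$ lies in the relative interior of $\Delta_P$. If $\mathcal{X}_0=\mathcal{X}_1$ and $\mathcal{Y}_0\ne\mathcal{Y}_1$, then $T$ is conditionally independent of $X$ given $Y$ under $Q^*$. If $\mathcal{Y}_0=\mathcal{Y}_1$ and $\mathcal{X}_0\neq\mathcal{X}_1$, then $T$ is conditionally independent of $Y$ given $X$ under $Q^*$.
   Context: $T,X,Y$ are random variables with finite state spaces $\mathcal{T},\mathcal{X},\mathcal{Y}$; $\Delta_{\mathcal{T},\mathcal{X},\mathcal{Y}}$ is the set of all joint distributions on $\mathcal{T}\times\mathcal{X}\times\mathcal{Y}$. For $P\in\Delta_{\mathcal{T},\mathcal{X},\mathcal{Y}}$, $\Delta_P=\{Q\in\Delta_{\mathcal{T},\mathcal{X},\mathcal{Y}}: Q(X=x,T=t)=P(X=x,T=t),\ Q(Y=y,T=t)=P(Y=y,T=t)\ \forall x,y,t\}$. For $t\in\{0,1\}$: $\mathcal{X}_t=\{x: P(X=x\mid T=t)>0\}$, $\mathcal{Y}_t=\{y: P(Y=y\mid T=t)>0\}$. *)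

(* Defs.v *)
From mathcomp Require Import all_boot.
From Stdlib Require Import Reals.
Set Implicit Arguments. Unset Strict Implicit. Unset Printing Implicit Defensive.

Local Open Scope R_scope.

(* A (candidate) joint distribution on T x X x Y with T = {0,1} represented by bool
   (false = 0, true = 1). *)
Definition jdist (X Y : finType) := bool -> X -> Y -> R.

Definition rsum (I : finType) (F : I -> R) : R := \big[Rplus/0]_(i : I) F i.

Section Defs.
Variables X Y : finType.

Definition is_dist (Q : jdist X Y) : Prop :=
  (forall t x y, 0 <= Q t x y) /\
  rsum (fun t : bool => rsum (fun x : X => rsum (fun y : Y => Q t x y))) = 1.

Definition PT (Q : jdist X Y) (t : bool) : R :=
  rsum (fun x : X => rsum (fun y : Y => Q t x y)).
Definition PXT (Q : jdist X Y) (x : X) (t : bool) : R := rsum (fun y : Y => Q t x y).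
Definition PYT (Q : jdist X Y) (y : Y) (t : bool) : R := rsum (fun x : X => Q t x y).
Definition PXY (Q : jdist X Y) (x : X) (y : Y) : R := rsum (fun t : bool => Q t x y).
Definition PX (Q : jdist X Y) (x : X) : R := rsum (fun t : bool => PXT Q x t).
Definition PY (Q : jdist X Y) (y : Y) : R := rsum (fun t : bool => PYT Q y t).

Definition DeltaP (P Q : jdist X Y) : Prop :=
  is_dist Q /\
  (forall x t, PXT Q x t = PXT P x t) /\
  (forall y t, PYT Q y t = PYT P y t).

Definition condEntropy_T_XY (Q : jdist X Y) : R :=
  - rsum (fun t : bool => rsum (fun x : X => rsum (fun y : Y =>
      if Rlt_dec 0 (Q t x y) then Q t x y * ln (Q t x y / PXY Q x y) else 0))).

Definition is_argmax_H (P Q : jdist X Y) : Prop :=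
  DeltaP P Q /\ forall Q', DeltaP P Q' -> condEntropy_T_XY Q' <= condEntropy_T_XY Q.

Definition affine_hull (C : jdist X Y -> Prop) (Q : jdist X Y) : Prop :=
  exists s : seq (R * jdist X Y),
    (forall p, List.In p s -> C p.2) /\
    \big[Rplus/0]_(p <- s) p.1 = 1 /\
    forall t x y, Q t x y = \big[Rplus/0]_(p <- s) (p.1 * p.2 t x y).

Definition rel_interior (C : jdist X Y -> Prop) (Q : jdist X Y) : Prop :=
  C Q /\ exists eps, 0 < eps /\
    forall Q', affine_hull C Q' ->
      (forall t x y, Rabs (Q' t x y - Q t x y) < eps) -> C Q'.

Definition Xsupp (P : jdist X Y) (t : bool) (x : X) : Prop := PXT P x t / PT P t > 0.
Definition Ysupp (P : jdist X Y) (t : bool) (y : Y) : Prop := PYT P y t / PT P t > 0.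

Definition CI_T_X_given_Y (Q : jdist X Y) : Prop :=
  forall t x y, Q t x y * PY Q y = PYT Q y t * PXY Q x y.
Definition CI_T_Y_given_X (Q : jdist X Y) : Prop :=
  forall t x y, Q t x y * PX Q x = PXT Q x t * PXY Q x y.

End Defs.

(* Main.v *)
Require Import Defs.
From HB Require Import structures.
From mathcomp Require Import all_boot.
From Stdlib Require Import Reals Lra Psatz Classical FunctionalExtensionality.
From Coquelicot Require Import Coquelicot.
Local Open Scope R_scope.

Lemma Rplus_assoc' : associative Rplus. Proof. move=> *; ring. Qed.
Lemma Rmult_assoc' : associative Rmult. Proof. move=> *; ring. Qed.
HB.instance Definition _ := Monoid.isComLaw.Build R 0 Rplus Rplus_assoc' Rplus_comm Rplus_0_l.
HB.instance Definition _ := Monoid.isComLaw.Build R 1 Rmult Rmult_assoc' Rmult_comm Rmult_1_l.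
HB.instance Definition _ := Monoid.isMulLaw.Build R 0 Rmult Rmult_0_l Rmult_0_r.
HB.instance Definition _ := Monoid.isAddLaw.Build R Rmult Rplus Rmult_plus_distr_r Rmult_plus_distr_l.

Section Rsum.
Variable I : finType.
Implicit Types F G : I -> R.

Lemma rsum_ext F G : (forall i, F i = G i) -> rsum F = rsum G.
Proof. by move=> h; apply: eq_bigr => i _. Qed.
Lemma rsum_add F G : rsum (fun i => F i + G i) = rsum F + rsum G.
Proof. by rewrite /rsum big_split. Qed.
Lemma rsum_scal c F : rsum (fun i => c * F i) = c * rsum F.
Proof. by rewrite /rsum big_distrr. Qed.
Lemma rsum_sub F G : rsum (fun i => F i - G i) = rsum F - rsum G.
Proof.
rewrite (@rsum_ext (fun i => F i - G i) (fun i => F i + (-1) * G i)); last by move=> i; ring.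
rewrite rsum_add rsum_scal; ring.
Qed.
Lemma rsum_ge0 F : (forall i, 0 <= F i) -> 0 <= rsum F.
Proof.
move=> h; rewrite /rsum; apply: (big_ind (fun x => 0 <= x)) => //; first lra.
move=> a b ha hb; lra.
Qed.
Lemma rsum_single F (a : I) : (forall i, 0 <= F i) -> F a <= rsum F.
Proof.
move=> h; rewrite /rsum (bigD1 a) //=.
have: 0 <= \big[Rplus/0]_(i | i != a) F i.
  apply: (big_ind (fun x => 0 <= x)) => //; first lra.
  move=> x y hx hy; lra.
lra.
Qed.
Lemma rsum_zero F (a : I) : (forall i, 0 <= F i) -> rsum F = 0 -> F a = 0.
Proof. move=> h h0; have := @rsum_single F a h; have := h a; lra. Qed.

Definition ind {T : eqType} (a b : T) : R := if a == b then 1 else 0.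

Lemma rsum_delta F (a : I) : rsum (fun i => ind i a * F i) = F a.
Proof.
rewrite /rsum (bigD1 a) //= /ind eqxx big1; first ring.
by move=> i /negbTE ->; ring.
Qed.
Lemma rsum_ind (a : I) : rsum (fun i => ind i a) = 1.
Proof.
rewrite (@rsum_ext (fun i => ind i a) (fun i => ind i a * 1)); last by move=> i; ring.
by rewrite rsum_delta.
Qed.
Lemma rsum_ind_diff F (a b : I) : rsum (fun i => (ind i a - ind i b) * F i) = F a - F b.
Proof.
rewrite (@rsum_ext (fun i => (ind i a - ind i b) * F i) (fun i => ind i a * F i - ind i b * F i)); last by move=> i; ring.
by rewrite rsum_sub !rsum_delta.
Qed.

Lemma is_derive_rsum (H : I -> R -> R) (H' : I -> R) x :
  (forall i, is_derive (H i) x (H' i)) ->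
  is_derive (fun d => rsum (fun i => H i d)) x (rsum H').
Proof.
move=> h; rewrite /rsum; elim: (index_enum I) => [|i r IH].
  apply: (is_derive_ext (fun _ => 0)); first by move=> t; rewrite big_nil.
  rewrite big_nil; exact: is_derive_const.
apply: (is_derive_ext (fun d => H i d + \big[Rplus/0]_(j <- r) H j d)).
  by move=> t; rewrite big_cons.
rewrite big_cons; exact: is_derive_plus.
Qed.
End Rsum.

Lemma rsum_bool (F : bool -> R) : rsum F = F true + F false.
Proof. by rewrite /rsum big_bool. Qed.

Lemma rsum_swap (I J : finType) (F : I -> J -> R) :
  rsum (fun i => rsum (fun j => F i j)) = rsum (fun j => rsum (fun i => F i j)).
Proof. by rewrite /rsum exchange_big. Qed.

Definition term (q s d e δ : R) : R :=
  if Rlt_dec 0 (q + δ * d) then (q + δ * d) * ln ((q + δ * d) / (s + δ * e)) else 0.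

Lemma term_derive q s d e : 0 <= q -> q <= s -> (q = 0 -> d = 0) ->
  is_derive (term q s d e) 0 (d * ln (q / s) + d - q * e / s).
Proof.
move=> hq hqs hd.
case: (Rle_lt_or_eq_dec _ _ hq) => [qpos|q0]; last first.
  subst q; rewrite hd //.
  apply: (is_derive_ext (fun _ => 0)).
    move=> t; rewrite /term Rmult_0_r Rplus_0_r.
    destruct (Rlt_dec 0 0) as [h|h]; [lra|done].
  have -> : 0 * ln (0 / s) + 0 - 0 * e / s = 0 by rewrite /Rdiv; ring.
  exact: is_derive_const.
have spos : 0 < s by lra.
have hloc : locally 0 (fun δ => (q + δ * d) * ln ((q + δ * d) / (s + δ * e)) = term q s d e δ).
  have hd1 : 0 < Rabs d + 1 by have := Rabs_pos d; lra.
  exists (mkposreal (q / (Rabs d + 1)) (Rdiv_lt_0_compat _ _ qpos hd1)).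
  move=> z Hz.
  have Hz' : Rabs z < q / (Rabs d + 1).
    move: Hz; rewrite /ball /= /AbsRing_ball /abs /minus /plus /opp /=.
    by rewrite Ropp_0 Rplus_0_r.
  rewrite /term; destruct (Rlt_dec 0 (q + z * d)) as [hp|hn] => //; exfalso; apply: hn.
  have ha := Rabs_pos d; have hz := Rabs_pos z.
  have h1 : Rabs z * (Rabs d + 1) < q.
    have := Rmult_lt_compat_r (Rabs d + 1) _ _ ltac:(lra) Hz'.
    by rewrite /Rdiv Rmult_assoc Rinv_l ?Rmult_1_r; lra.
  have h2 := Rle_abs (- (z * d)); rewrite Rabs_Ropp Rabs_mult in h2.
  nra.
apply: (is_derive_ext_loc _ _ _ _ hloc).
auto_derive.
  rewrite !Rmult_0_l !Rplus_0_r; split; [lra|split=> //].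
  apply: Rmult_lt_0_compat => //; exact: Rinv_0_lt_compat.
rewrite !Rmult_0_l !Rplus_0_r /Rdiv; field; lra.
Qed.

Section Main.
Context {X Y : finType}.

Definition Qd (Q D : jdist X Y) (δ : R) : jdist X Y := fun t x y => Q t x y + δ * D t x y.

Lemma PXY_Qd Q D δ x y : PXY (Qd Q D δ) x y = PXY Q x y + δ * rsum (fun t => D t x y).
Proof. by rewrite /PXY /Qd rsum_add rsum_scal. Qed.

Lemma nonneg_PXY (Q : jdist X Y) x y : (forall t x y, 0 <= Q t x y) -> Q true x y + Q false x y = PXY Q x y.
Proof. by move=> _; rewrite /PXY rsum_bool. Qed.

Lemma stationary (P Q D : jdist X Y) m : is_argmax_H P Q -> 0 < m ->
  (forall t x y, D t x y <> 0 -> m <= Q t x y) ->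
  (forall t x y, Rabs (D t x y) <= 1) ->
  (forall t x, rsum (fun y => D t x y) = 0) ->
  (forall t y, rsum (fun x => D t x y) = 0) ->
  rsum (fun t => rsum (fun x => rsum (fun y => D t x y * ln (Q t x y / PXY Q x y)))) = 0.
Proof.
move=> [hQ hmax] mpos hsupp hb hrow hcol.
have [[hnn hsum] [hpx hpy]] := hQ.
have hD0 : forall t x y, Q t x y = 0 -> D t x y = 0.
  move=> t x y hq; case: (Req_dec (D t x y) 0) => // /hsupp; lra.
have hrowQ : forall δ t x, rsum (fun y => Qd Q D δ t x y) = rsum (fun y => Q t x y).
  by move=> δ t x; rewrite /Qd rsum_add rsum_scal hrow Rmult_0_r Rplus_0_r.
have hcolQ : forall δ t y, rsum (fun x => Qd Q D δ t x y) = rsum (fun x => Q t x y).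
  by move=> δ t y; rewrite /Qd rsum_add rsum_scal hcol Rmult_0_r Rplus_0_r.
have hin : forall δ, - (m / 2) < δ -> δ < m / 2 -> DeltaP P (Qd Q D δ).
  move=> δ h1 h2; split; [split|split].
  - move=> t x y; rewrite /Qd.
    case: (Req_dec (D t x y) 0) => [->|hn]; first by have := hnn t x y; lra.
    have hm := hsupp _ _ _ hn.
    have h3 := Rle_abs (- (δ * D t x y)); rewrite Rabs_Ropp Rabs_mult in h3.
    have h4 := hb t x y; have h5 := Rabs_pos δ; have h6 := Rabs_pos (D t x y).
    have h7 : Rabs δ < m / 2 by apply: Rabs_def1.
    nra.
  - rewrite -hsum; apply: rsum_ext => t; apply: rsum_ext => x; exact: hrowQ.
  - by move=> x t; rewrite -hpx /PXT hrowQ.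
  - by move=> y t; rewrite -hpy /PYT hcolQ.
have Q0 : Qd Q D 0 = Q.
  apply: functional_extensionality => t; apply: functional_extensionality => x.
  apply: functional_extensionality => y; rewrite /Qd; ring.
set G := fun t x y => D t x y * ln (Q t x y / PXY Q x y) + D t x y
          - Q t x y * rsum (fun t' => D t' x y) / PXY Q x y.
have hder : is_derive (fun δ => condEntropy_T_XY (Qd Q D δ)) 0
              (- rsum (fun t => rsum (fun x => rsum (fun y => G t x y)))).
  apply: (is_derive_ext (fun δ => - rsum (fun t => rsum (fun x => rsum (fun y =>
        term (Q t x y) (PXY Q x y) (D t x y) (rsum (fun t' => D t' x y)) δ))))).
    move=> δ; rewrite /condEntropy_T_XY; congr (- _).
    apply: rsum_ext => t; apply: rsum_ext => x; apply: rsum_ext => y.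
    by rewrite PXY_Qd /term /Qd.
  apply: is_derive_opp.
  apply: is_derive_rsum => t; apply: is_derive_rsum => x; apply: is_derive_rsum => y.
  apply: term_derive; [exact: hnn| |exact: hD0].
  rewrite /PXY; apply: (@rsum_single _ (fun t => Q t x y)) => t'; exact: hnn.
have hz : - rsum (fun t => rsum (fun x => rsum (fun y => G t x y))) = 0.
  have Hl := proj1 (is_derive_Reals _ _ _) hder.
  have hle : forall δ, -(m/2) < δ -> δ < m/2 ->
      condEntropy_T_XY (Qd Q D δ) <= condEntropy_T_XY (Qd Q D 0).
    move=> δ h1 h2; rewrite Q0; apply: hmax; exact: hin.
  have mm : -(m/2) < 0 by lra.
  have mp : 0 < m/2 by lra.
  exact: (deriv_maximum _ _ _ 0 (exist _ _ Hl) mm mp hle).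
have hG : forall x y, rsum (fun t => G t x y) = rsum (fun t => D t x y * ln (Q t x y / PXY Q x y)).
  move=> x y; rewrite /G !rsum_bool -(nonneg_PXY Q x y hnn).
  case: (Req_dec (Q true x y + Q false x y) 0) => hs.
    have e1 : Q true x y = 0 by have := hnn true x y; have := hnn false x y; lra.
    have e2 : Q false x y = 0 by have := hnn true x y; have := hnn false x y; lra.
    rewrite e1 e2 (hD0 _ _ _ e1) (hD0 _ _ _ e2) /Rdiv; ring.
  rewrite /Rdiv; field; exact: hs.
have swap3 : forall F : bool -> X -> Y -> R,
    rsum (fun t => rsum (fun x => rsum (fun y => F t x y))) =
    rsum (fun x => rsum (fun y => rsum (fun t => F t x y))).
  move=> F; rewrite rsum_swap; apply: rsum_ext => x; exact: rsum_swap.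
have E : rsum (fun t => rsum (fun x => rsum (fun y => G t x y))) =
   rsum (fun t => rsum (fun x => rsum (fun y => D t x y * ln (Q t x y / PXY Q x y)))).
  rewrite (swap3 G) (swap3 (fun t x y => D t x y * ln (Q t x y / PXY Q x y))).
  apply: rsum_ext => x; apply: rsum_ext => y; exact: hG.
rewrite -E; lra.
Qed.

Definition Lr (Q : jdist X Y) t x y := ln (Q t x y / PXY Q x y).

Lemma rect_stat {P Q : jdist X Y} {t0 x1 x2 y1 y2} : is_argmax_H P Q ->
  0 < Q t0 x1 y1 -> 0 < Q t0 x1 y2 -> 0 < Q t0 x2 y1 -> 0 < Q t0 x2 y2 ->
  Lr Q t0 x1 y1 - Lr Q t0 x1 y2 - Lr Q t0 x2 y1 + Lr Q t0 x2 y2 = 0.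
Proof.
move=> hm h11 h12 h21 h22.
set D : jdist X Y := fun t x y => ind t t0 * ((ind x x1 - ind x x2) * (ind y y1 - ind y y2)).
set m := Rmin (Rmin (Q t0 x1 y1) (Q t0 x1 y2)) (Rmin (Q t0 x2 y1) (Q t0 x2 y2)).
have m11 : m <= Q t0 x1 y1 by rewrite /m; apply: Rle_trans (Rmin_l _ _) (Rmin_l _ _).
have m12 : m <= Q t0 x1 y2 by rewrite /m; apply: Rle_trans (Rmin_l _ _) (Rmin_r _ _).
have m21 : m <= Q t0 x2 y1 by rewrite /m; apply: Rle_trans (Rmin_r _ _) (Rmin_l _ _).
have m22 : m <= Q t0 x2 y2 by rewrite /m; apply: Rle_trans (Rmin_r _ _) (Rmin_r _ _).
have mpos : 0 < m.
  rewrite /m; apply: Rmin_glb_lt; apply: Rmin_glb_lt; lra.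
have := @stationary P Q D m hm mpos.
have H := rsum_delta.
have -> : rsum (fun t => rsum (fun x => rsum (fun y => D t x y * ln (Q t x y / PXY Q x y)))) =
   Lr Q t0 x1 y1 - Lr Q t0 x1 y2 - Lr Q t0 x2 y1 + Lr Q t0 x2 y2.
  rewrite (@rsum_ext _ _ (fun t => ind t t0 * rsum (fun x => (ind x x1 - ind x x2) *
      rsum (fun y => (ind y y1 - ind y y2) * Lr Q t x y)))); last first.
    move=> t; rewrite -rsum_scal; apply: (@rsum_ext X) => x; rewrite -rsum_scal -rsum_scal; apply: (@rsum_ext Y) => y.
    by rewrite /D /Lr !Rmult_assoc.
  rewrite rsum_delta (@rsum_ext _ _ (fun x => (ind x x1 - ind x x2) * (Lr Q t0 x y1 - Lr Q t0 x y2))); last first.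
    by move=> x; rewrite rsum_ind_diff.
  rewrite rsum_ind_diff; ring.
apply.
- move=> t x y; rewrite /D /ind.
  repeat (case: eqP => [?|?]; subst); try (move=> HD; exfalso; apply: HD; ring); lra.
- move=> t x y; apply: Rabs_le; rewrite /D /ind.
  case: (t == t0); case: (x == x1); case: (x == x2); case: (y == y1); case: (y == y2); lra.
- move=> t x.
  rewrite (@rsum_ext _ _ (fun y => (ind t t0 * (ind x x1 - ind x x2)) * (ind y y1 - ind y y2))); last first.
    move=> y; rewrite /D; ring.
  rewrite rsum_scal rsum_sub !rsum_ind; ring.
- move=> t y.
  rewrite (@rsum_ext _ _ (fun x => (ind t t0 * (ind y y1 - ind y y2)) * (ind x x1 - ind x x2))); last first.
    move=> x; rewrite /D; ring.
  rewrite rsum_scal rsum_sub !rsum_ind; ring.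
Qed.

Lemma PXT_ge0 {Q : jdist X Y} x t : (forall t x y, 0 <= Q t x y) -> 0 <= PXT Q x t.
Proof. move=> h; apply: rsum_ge0 => y; exact: h. Qed.
Lemma PYT_ge0 {Q : jdist X Y} y t : (forall t x y, 0 <= Q t x y) -> 0 <= PYT Q y t.
Proof. move=> h; apply: rsum_ge0 => x; exact: h. Qed.

Lemma entry_le1 (Q : jdist X Y) t x y : is_dist Q -> Q t x y <= 1.
Proof.
move=> [h hs]; rewrite -hs.
have a := @rsum_single _ (fun y => Q t x y) y (fun y' => h t x y').
have b := @rsum_single _ (fun x => rsum (fun y => Q t x y)) x
   (fun x' => @rsum_ge0 _ _ (fun y' => h t x' y')).
have c := @rsum_single _ (fun t => rsum (fun x => rsum (fun y => Q t x y))) t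
   (fun t' => @rsum_ge0 _ _ (fun x' => @rsum_ge0 _ _ (fun y' => h t' x' y'))).
simpl in a, b, c; lra.
Qed.

Lemma pos_cell {P Q : jdist X Y} {t x y} : is_dist P -> PT P false > 0 -> PT P true > 0 ->
  rel_interior (DeltaP P) Q -> 0 < PXT P x t -> 0 < PYT P y t -> 0 < Q t x y.
Proof.
move=> hP h0 h1 [hQ [eps [heps hint]]] hx hy.
have hPT : forall t, 0 < PT P t by case.
have hPnn := proj1 hP.
set Q1 : jdist X Y := fun t x y => PXT P x t * PYT P y t / PT P t.
have sumPYT : forall t, rsum (fun y => PYT P y t) = PT P t.
  by move=> t'; rewrite /PYT /PT rsum_swap.
have hPXT1 : forall x t, PXT Q1 x t = PXT P x t.
  move=> x' t'; rewrite /PXT /Q1 /Rdiv.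
  rewrite (@rsum_ext _ _ (fun y => (PXT P x' t' * / PT P t') * PYT P y t')); last by move=> y'; ring.
  rewrite rsum_scal sumPYT; have := hPT t'; rewrite /PXT => ?; field; lra.
have hPYT1 : forall y t, PYT Q1 y t = PYT P y t.
  move=> y' t'; rewrite /PYT /Q1 /Rdiv.
  rewrite (@rsum_ext _ _ (fun x => (PYT P y' t' * / PT P t') * PXT P x t')); last by move=> x'; ring.
  rewrite rsum_scal; rewrite -/(PT P t'); have := hPT t'; rewrite /PYT => ?; field; lra.
have hQ1 : DeltaP P Q1.
  split; [split|split] => //.
  - move=> t' x' y'; rewrite /Q1 /Rdiv; apply: Rmult_le_pos; last by apply: Rlt_le; apply: Rinv_0_lt_compat.
    by apply: Rmult_le_pos; [apply: PXT_ge0|apply: PYT_ge0].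
  - rewrite -(proj2 hP); apply: rsum_ext => t'; apply: rsum_ext => x'.
    exact: hPXT1.
set δ := eps / 2.
have hδ : 0 < δ by rewrite /δ; lra.
set Q' : jdist X Y := fun t x y => (1 + δ) * Q t x y + (- δ) * Q1 t x y.
have hQ' : DeltaP P Q'.
  apply: hint.
    exists [:: (1 + δ, Q); (- δ, Q1)]; split; [|split].
    - move=> p /= [<-|[<-|[]]] //.
    - rewrite big_cons big_cons big_nil /=; ring.
    - move=> t' x' y'; rewrite big_cons big_cons big_nil /= /Q'; ring.
  move=> t' x' y'; rewrite /Q'.
  have e1 := entry_le1 Q t' x' y' (proj1 hQ).
  have e2 := entry_le1 Q1 t' x' y' (proj1 hQ1).
  have n1 := (proj1 (proj1 hQ)) t' x' y'.
  have n2 := (proj1 (proj1 hQ1)) t' x' y'.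
  have hd1 : 0 <= δ * (1 - (Q t' x' y' - Q1 t' x' y')) by apply: Rmult_le_pos; lra.
  have hd2 : 0 <= δ * (1 + (Q t' x' y' - Q1 t' x' y')) by apply: Rmult_le_pos; lra.
  have he : eps = 2 * δ by rewrite /δ; field.
  apply: Rabs_def1; lra.
have hq1 : 0 < Q1 t x y.
  rewrite /Q1 /Rdiv; apply: Rmult_lt_0_compat; first exact: Rmult_lt_0_compat.
  exact: Rinv_0_lt_compat.
have := (proj1 (proj1 hQ')) t x y; rewrite /Q' => h.
nra.
Qed.

Lemma zero_cellY {P Q : jdist X Y} {t} x {y} : DeltaP P Q -> PYT P y t = 0 -> Q t x y = 0.
Proof.
move=> [[hnn _] [_ hpy]] h; rewrite -hpy in h.
exact: (@rsum_zero _ (fun x => Q t x y) x (fun x' => hnn t x' y) h).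
Qed.
Lemma zero_cellX {P Q : jdist X Y} {t x} y : DeltaP P Q -> PXT P x t = 0 -> Q t x y = 0.
Proof.
move=> [[hnn _] [hpx _]] h; rewrite -hpx in h.
exact: (@rsum_zero _ (fun y => Q t x y) y (fun y' => hnn t x y') h).
Qed.

Lemma PXY_t0 (Q : jdist X Y) t0 x y : PXY Q x y = Q t0 x y + Q (~~ t0) x y.
Proof. rewrite /PXY rsum_bool; case: t0 => /=; ring. Qed.

Lemma Lr_zero {Q : jdist X Y} {t0 x y} : 0 < Q t0 x y -> Q (~~ t0) x y = 0 -> Lr Q t0 x y = 0.
Proof.
move=> h1 h2; rewrite /Lr (PXY_t0 Q t0) h2 Rplus_0_r /Rdiv Rinv_r ?ln_1 //; lra.
Qed.

Lemma ratio_eq (a b c d : R) : 0 < a -> 0 <= b -> 0 < c -> 0 <= d ->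
  ln (a / (a + b)) = ln (c / (c + d)) -> a * d = c * b.
Proof.
move=> ha hb hc hd h.
have e : a / (a + b) = c / (c + d).
  apply: ln_inv => //; apply: Rdiv_lt_0_compat; lra.
have e2 : a * (c + d) = c * (a + b).
  transitivity (a / (a + b) * (a + b) * (c + d)); first by field; lra.
  rewrite e; field; lra.
nra.
Qed.

Lemma keyX (P Q : jdist X Y) t0 y0 : is_dist P -> PT P false > 0 -> PT P true > 0 ->
  is_argmax_H P Q -> rel_interior (DeltaP P) Q ->
  0 < PYT P y0 t0 -> PYT P y0 (~~ t0) = 0 ->
  (forall x, PXT P x t0 = 0 -> PXT P x (~~ t0) = 0) ->
  forall x x' y, Q t0 x y * Q (~~ t0) x' y = Q t0 x' y * Q (~~ t0) x y.
Proof.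
move=> hP h0 h1 hm hint hy0 hy0' hx x x' y.
have hQ := proj1 hm.
have hnn := proj1 hP.
case: (Rle_lt_or_eq_dec _ _ (PYT_ge0 y t0 hnn)) => [py0|py0]; last first.
  rewrite !(zero_cellY x hQ (esym py0)) !(zero_cellY x' hQ (esym py0)); ring.
case: (Rle_lt_or_eq_dec _ _ (PYT_ge0 y (~~ t0) hnn)) => [py1|py1]; last first.
  rewrite !(zero_cellY x hQ (esym py1)) !(zero_cellY x' hQ (esym py1)); ring.
case: (Rle_lt_or_eq_dec _ _ (PXT_ge0 x t0 hnn)) => [px|px]; last first.
  rewrite (zero_cellX y hQ (esym px)) (zero_cellX y hQ (hx _ (esym px))); ring.
case: (Rle_lt_or_eq_dec _ _ (PXT_ge0 x' t0 hnn)) => [px'|px']; last first.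
  rewrite (zero_cellX y hQ (esym px')) (zero_cellX y hQ (hx _ (esym px'))); ring.
have c1 := pos_cell hP h0 h1 hint px py0.
have c2 := pos_cell hP h0 h1 hint px hy0.
have c3 := pos_cell hP h0 h1 hint px' py0.
have c4 := pos_cell hP h0 h1 hint px' hy0.
have := rect_stat hm c1 c2 c3 c4.
rewrite (Lr_zero c2 (zero_cellY x hQ hy0')) (Lr_zero c4 (zero_cellY x' hQ hy0')).
rewrite /Lr !(PXY_t0 Q t0) => h.
have hnQ := proj1 (proj1 hQ).
apply: ratio_eq; [exact: c1|exact: hnQ|exact: c3|exact: hnQ|lra].
Qed.

Lemma keyY (P Q : jdist X Y) t0 x0 : is_dist P -> PT P false > 0 -> PT P true > 0 ->
  is_argmax_H P Q -> rel_interior (DeltaP P) Q ->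
  0 < PXT P x0 t0 -> PXT P x0 (~~ t0) = 0 ->
  (forall y, PYT P y t0 = 0 -> PYT P y (~~ t0) = 0) ->
  forall x y y', Q t0 x y * Q (~~ t0) x y' = Q t0 x y' * Q (~~ t0) x y.
Proof.
move=> hP h0 h1 hm hint hx0 hx0' hy x y y'.
have hQ := proj1 hm.
have hnn := proj1 hP.
case: (Rle_lt_or_eq_dec _ _ (PXT_ge0 x t0 hnn)) => [px0|px0]; last first.
  rewrite !(zero_cellX y hQ (esym px0)) !(zero_cellX y' hQ (esym px0)); ring.
case: (Rle_lt_or_eq_dec _ _ (PXT_ge0 x (~~ t0) hnn)) => [px1|px1]; last first.
  rewrite !(zero_cellX y hQ (esym px1)) !(zero_cellX y' hQ (esym px1)); ring.
case: (Rle_lt_or_eq_dec _ _ (PYT_ge0 y t0 hnn)) => [py|py]; last first.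
  rewrite (zero_cellY x hQ (esym py)) (zero_cellY x hQ (hy _ (esym py))); ring.
case: (Rle_lt_or_eq_dec _ _ (PYT_ge0 y' t0 hnn)) => [py'|py']; last first.
  rewrite (zero_cellY x hQ (esym py')) (zero_cellY x hQ (hy _ (esym py'))); ring.
have c1 := pos_cell hP h0 h1 hint px0 py.
have c2 := pos_cell hP h0 h1 hint px0 py'.
have c3 := pos_cell hP h0 h1 hint hx0 py.
have c4 := pos_cell hP h0 h1 hint hx0 py'.
have := rect_stat hm c1 c2 c3 c4.
rewrite (Lr_zero c3 (zero_cellX y hQ hx0')) (Lr_zero c4 (zero_cellX y' hQ hx0')).
rewrite /Lr !(PXY_t0 Q t0) => h.
have hnQ := proj1 (proj1 hQ).
apply: ratio_eq; [exact: c1|exact: hnQ|exact: c2|exact: hnQ|lra].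
Qed.

Lemma ciX (Q : jdist X Y) :
  (forall x x' y, Q false x y * Q true x' y = Q false x' y * Q true x y) -> CI_T_X_given_Y Q.
Proof.
move=> K t x y; rewrite /PY rsum_bool /PXY rsum_bool.
have S : Q true x y * PYT Q y false = PYT Q y true * Q false x y.
  rewrite /PYT -rsum_scal (Rmult_comm (rsum _)) -rsum_scal.
  apply: rsum_ext => x'; have := K x' x y; nra.
case: t; nra.
Qed.

Lemma ciY (Q : jdist X Y) :
  (forall x y y', Q false x y * Q true x y' = Q false x y' * Q true x y) -> CI_T_Y_given_X Q.
Proof.
move=> K t x y; rewrite /PX rsum_bool /PXY rsum_bool.
have S : Q true x y * PXT Q x false = PXT Q x true * Q false x y.
  rewrite /PXT -rsum_scal (Rmult_comm (rsum _)) -rsum_scal.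
  apply: rsum_ext => y'; have := K x y' y; nra.
case: t; nra.
Qed.

End Main.

Lemma supp_pos a b : 0 < b -> a / b > 0 -> 0 < a.
Proof.
move=> hb h; have -> : a = a / b * b by field; lra.
exact: Rmult_lt_0_compat.
Qed.
Lemma supp_of_pos a b : 0 < b -> 0 < a -> a / b > 0.
Proof. move=> hb ha; exact: Rdiv_lt_0_compat. Qed.
Lemma zero_of_notsupp a b : 0 <= a -> 0 < b -> ~ (a / b > 0) -> a = 0.
Proof.
move=> ha hb hn; case: (Rle_lt_or_eq_dec _ _ ha) => // hp.
by exfalso; apply: hn; apply: supp_of_pos.
Qed.

Theorem mainTheorem15 (X Y : finType) (P Qs : jdist X Y) :
  is_dist P -> PT P false > 0 -> PT P true > 0 ->
  is_argmax_H P Qs ->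
  rel_interior (DeltaP P) Qs ->
  ((forall x, Xsupp P false x <-> Xsupp P true x) ->
   ~ (forall y, Ysupp P false y <-> Ysupp P true y) ->
   CI_T_X_given_Y Qs) /\
  ((forall y, Ysupp P false y <-> Ysupp P true y) ->
   ~ (forall x, Xsupp P false x <-> Xsupp P true x) ->
   CI_T_Y_given_X Qs).
Proof.
move=> hP h0 h1 hm hint.
have hPT : forall t, 0 < PT P t by case.
have hnn := proj1 hP.
split.
- move=> hx hy.
  have [y0 hy0] := not_all_ex_not _ _ hy.
  have hxi : forall t0 x, PXT P x t0 = 0 -> PXT P x (~~ t0) = 0.
    move=> t0 x hz; apply: (@zero_of_notsupp _ (PT P (~~ t0)) (PXT_ge0 x (~~ t0) hnn) (hPT (~~ t0))) => hs.
    have : Xsupp P t0 x by case: t0 hz hs => /= hz hs; [apply/hx|apply/hx].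
    move=> hX; have := supp_pos _ _ (hPT t0) hX; lra.
  case: (classic (Ysupp P false y0)) => yf.
  + have yt : ~ Ysupp P true y0 by move=> yt; apply: hy0; split.
    have K := @keyX _ _ P Qs false y0 hP h0 h1 hm hint (supp_pos _ _ (hPT _) yf)
       (zero_of_notsupp _ _ (PYT_ge0 y0 _ hnn) (hPT _) yt) (hxi false).
    exact: ciX K.
  + have yt : Ysupp P true y0 by apply: NNPP => yt; apply: hy0; split.
    have K := @keyX _ _ P Qs true y0 hP h0 h1 hm hint (supp_pos _ _ (hPT _) yt)
       (zero_of_notsupp _ _ (PYT_ge0 y0 _ hnn) (hPT _) yf) (hxi true).
    apply: ciX => x x' y; have := K x' x y; simpl; nra.
- move=> hy hx.
  have [x0 hx0] := not_all_ex_not _ _ hx.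
  have hyi : forall t0 y, PYT P y t0 = 0 -> PYT P y (~~ t0) = 0.
    move=> t0 y hz; apply: (@zero_of_notsupp _ (PT P (~~ t0)) (PYT_ge0 y (~~ t0) hnn) (hPT (~~ t0))) => hs.
    have : Ysupp P t0 y by case: t0 hz hs => /= hz hs; [apply/hy|apply/hy].
    move=> hX; have := supp_pos _ _ (hPT t0) hX; lra.
  case: (classic (Xsupp P false x0)) => xf.
  + have xt : ~ Xsupp P true x0 by move=> xt; apply: hx0; split.
    have K := @keyY _ _ P Qs false x0 hP h0 h1 hm hint (supp_pos _ _ (hPT _) xf)
       (zero_of_notsupp _ _ (PXT_ge0 x0 _ hnn) (hPT _) xt) (hyi false).
    exact: ciY K.
  + have xt : Xsupp P true x0 by apply: NNPP => xt; apply: hx0; split.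
    have K := @keyY _ _ P Qs true x0 hP h0 h1 hm hint (supp_pos _ _ (hPT _) xt)
       (zero_of_notsupp _ _ (PXT_ge0 x0 _ hnn) (hPT _) xf) (hyi true).
    apply: ciY => x y y'; have := K x y' y; simpl; nra.
Qed.
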